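(* For any $k,d$ and $\rho$, a Bayes-optimal strategy for $\mathrm{Sing}(k,q_{HC})$ is: the learner keeps all of its data, and on a test point $z$ outputs the label of the training example closest to $z$ in Hamming distance.
   Context: Component distribution $q_{HC}$ (dimension $d$, $\rho\in[0,1]$): a subpopulation has $\mathcal I\subseteq[d]$ containing each index independently w.p. $\rho$ and uniform bits $b(i)$, $i\in\mathcal I$; an example from it is $z\in\{0,1\}^d$ with $z(i)=b(i)$ on $\mathcal I$ and independent uniform bits elsewhere. Task $\mathrm{Sing}(k,q_{HC})$: draw $k$ subpopulations i.i.d. from $q_{HC}$ and one example $x_j$ from subpopulation $j$, $j\in[k]$; the learner receives $(x_1,\dots,x_k)$ (example $x_j$ has label $j$); an index $j^*$ is uniform in $[k]$ and a fresh test point $z$ is drawn from subpopulation $j^*$; the learner must output $j^*$. *)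

(* Defs.v *)
From mathcomp Require Import all_boot all_order all_algebra.
Set Implicit Arguments. Unset Strict Implicit. Unset Printing Implicit Defensive.
Import Order.TTheory GRing.Theory Num.Theory.
Local Open Scope ring_scope.

Definition example (d : nat) := {ffun 'I_d -> bool}.

(* A subpopulation of q_HC: the index set I and the bits b.  The bits b are
   drawn uniformly on all of [d]; only the values on I are ever used, so the
   induced distribution over subpopulations (as distributions over examples)
   is exactly the one of q_HC. *)
Definition subpop (d : nat) := ({set 'I_d} * {ffun 'I_d -> bool})%type.

Definition subpop_prob (R : realFieldType) (d : nat) (rho : R) (s : subpop d) : R :=
  rho ^+ #|s.1| * (1 - rho) ^+ (d - #|s.1|) / (2%:R ^+ d).

Definition example_prob (R : realFieldType) (d : nat) (s : subpop d) (z : example d) : R :=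
  if [forall i, (i \in s.1) ==> (z i == s.2 i)]
  then (2%:R ^+ (d - #|s.1|))^-1 else 0.

(* A (possibly randomized) learner: given the training set (x_1..x_k) (x_j has
   label j) and the test point z, a distribution over the output label. *)
Definition strategy (R : realFieldType) (k d : nat) :=
  {ffun 'I_k -> example d} -> example d -> 'I_k -> R.

Definition is_strategy (R : realFieldType) (k d : nat) (A : strategy R k d) : Prop :=
  forall X z, (forall j, 0 <= A X z j) /\ \sum_(j < k) A X z j = 1.

Definition success_prob (R : realFieldType) (k d : nat) (rho : R)
    (A : strategy R k d) : R :=
  \sum_(S : {ffun 'I_k -> subpop d})
  \sum_(X : {ffun 'I_k -> example d})
  \sum_(js : 'I_k)
  \sum_(z : example d)
    (\prod_(j < k) (subpop_prob rho (S j) * example_prob R (S j) (X j)))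
    * (k%:R)^-1 * example_prob R (S js) z * A X z js.

Definition det_strategy (R : realFieldType) (k d : nat)
    (f : {ffun 'I_k -> example d} -> example d -> 'I_k) : strategy R k d :=
  fun X z j => ((f X z == j)%:R : R).

Definition hamming (d : nat) (x z : example d) : nat := #|[set i | x i != z i]|.

Definition nearest_neighbor_rule (k d : nat)
    (f : {ffun 'I_k -> example d} -> example d -> 'I_k) : Prop :=
  forall (X : {ffun 'I_k -> example d}) (z : example d) (j : 'I_k), (hamming (X (f X z)) z <= hamming (X j) z)%N.

(* Main.v *)
Require Import Defs.
From mathcomp Require Import all_boot all_order all_algebra.
From mathcomp Require Import ring lra zify.
Import Order.TTheory GRing.Theory Num.Theory.
Set Implicit Arguments. Unset Strict Implicit. Unset Printing Implicit Defensive.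
Local Open Scope ring_scope.

Lemma sum_subpop (R : realFieldType) (d : nat) (F : 'I_d -> bool -> bool -> R) :
  \sum_(s : subpop d) \prod_(i < d) F i (i \in s.1) (s.2 i) =
  \prod_(i < d) \sum_(u : bool) \sum_(v : bool) F i u v.
Proof.
rewrite -(pair_bigA _ (fun (I : {set 'I_d}) (b : {ffun 'I_d -> bool}) =>
   \prod_(i < d) F i (i \in I) (b i))) /=.
rewrite (reindex (fun u : {ffun 'I_d -> bool} => [set i | u i])) /=; last first.
  exists (fun A : {set 'I_d} => [ffun i => i \in A]) => u _.
    by apply/ffunP=> i; rewrite ffunE inE.
  by apply/setP => i; rewrite inE ffunE.
rewrite (bigA_distr_bigA (fun i w => \sum_(v : bool) F i w v)).
apply: eq_bigr => u _.
rewrite (bigA_distr_bigA (fun i v => F i (u i) v)).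
by apply: eq_bigr => b _; apply: eq_bigr => i _; rewrite inE.
Qed.

Lemma subpop_prob_prod (R : realFieldType) (d : nat) (rho : R) (s : subpop d) :
  subpop_prob rho s = \prod_(i < d) ((if i \in s.1 then rho else 1 - rho) / 2%:R).
Proof.
rewrite /subpop_prob big_split /= prodr_const card_ord.
rewrite (bigID (fun i => i \in s.1)) /=.
rewrite (eq_bigr (fun _ => rho)); last by move=> i ->.
rewrite [X in _ = _ * X * _](eq_bigr (fun _ => 1 - rho)); last by move=> i /negbTE ->.
rewrite !prodr_const exprVn.
have -> : #|[pred i : 'I_d | i \notin s.1]| = (d - #|s.1|)%N.
  have -> : #|[pred i : 'I_d | i \notin s.1]| = #|~: s.1|.
    by apply: eq_card => i; rewrite !inE.
  have := cardsC s.1; rewrite card_ord; lia.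
by [].
Qed.

Lemma card_notin (d : nat) (I : {set 'I_d}) :
  #|[pred i : 'I_d | i \notin I]| = (d - #|I|)%N.
Proof.
have -> : #|[pred i : 'I_d | i \notin I]| = #|~: I|.
  by apply: eq_card => i; rewrite !inE.
have := cardsC I; rewrite card_ord; lia.
Qed.

Lemma example_prob_prod (R : realFieldType) (d : nat) (s : subpop d) (x : example d) :
  example_prob R s x =
  \prod_(i < d) (if i \in s.1 then ((x i == s.2 i)%:R : R) else 2%:R^-1).
Proof.
rewrite /example_prob (bigID (fun i => i \in s.1)) /=.
rewrite [X in _ = _ * X](eq_bigr (fun _ => 2%:R^-1)); last by move=> i /negbTE ->.
rewrite prodr_const card_notin exprVn.
case: (boolP [forall _, _]) => H.
  rewrite big1 ?mul1r // => i Hi.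
  by have := forallP H i; rewrite Hi /= => /eqP ->; rewrite eqxx.
move/forallPn: H => [i]; rewrite negb_imply => /andP [Hi Hne].
by rewrite (bigD1 i) //= Hi (negbTE Hne) !mul0r.
Qed.

Definition mW (R : realFieldType) (d : nat) (rho : R) (x : example d) : R :=
  \sum_(s : subpop d) subpop_prob rho s * example_prob R s x.
Definition gW (R : realFieldType) (d : nat) (rho : R) (x z : example d) : R :=
  \sum_(s : subpop d) subpop_prob rho s * example_prob R s x * example_prob R s z.

Lemma mW_const (R : realFieldType) (d : nat) (rho : R) (x : example d) :
  mW rho x = \prod_(i < d) (2%:R^-1 : R).
Proof.
rewrite /mW.
under eq_bigr => s _ do rewrite subpop_prob_prod example_prob_prod -big_split /=.
rewrite (sum_subpop (fun i u v => (if u then rho else 1-rho)/2%:R *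
   (if u then ((x i == v)%:R : R) else 2%:R^-1))).
apply: eq_bigr => i _; rewrite !big_bool /=.
case: (x i) => /=; rewrite ?mulr1n ?mulr0n; by field.
Qed.

Lemma gW_prod (R : realFieldType) (d : nat) (rho : R) (x z : example d) :
  gW rho x z = \prod_(i < d) (if x i == z i then rho / 2%:R + (1 - rho) / 4%:R
                              else (1 - rho) / 4%:R).
Proof.
rewrite /gW.
under eq_bigr => s _ do rewrite subpop_prob_prod !example_prob_prod -!big_split /=.
rewrite (sum_subpop (fun i u v => (if u then rho else 1-rho)/2%:R *
   (if u then ((x i == v)%:R : R) else 2%:R^-1) *
   (if u then ((z i == v)%:R : R) else 2%:R^-1))).
apply: eq_bigr => i _; rewrite !big_bool /=.
case: (x i); case: (z i) => /=; rewrite ?mulr1n ?mulr0n; by field.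
Qed.

Lemma gW_ham (R : realFieldType) (d : nat) (rho : R) (x z : example d) :
  gW rho x z = ((1 - rho) / 4%:R) ^+ (hamming x z) *
               (rho / 2%:R + (1 - rho) / 4%:R) ^+ (d - hamming x z).
Proof.
rewrite gW_prod (bigID (fun i => x i != z i)) /=.
rewrite (eq_bigr (fun _ => (1 - rho) / 4%:R)); last by move=> i /negbTE ->.
rewrite [X in _ * X](eq_bigr (fun _ => rho / 2%:R + (1 - rho) / 4%:R)); last first.
  by move=> i; rewrite negbK => ->.
rewrite !prodr_const; congr (_ ^+ _ * _ ^+ _).
  by rewrite /hamming; apply: eq_card => i; rewrite !inE.
rewrite /hamming -card_notin; apply: eq_card => i; rewrite !inE //.
Qed.

Lemma gW_mono (R : realFieldType) (d : nat) (rho : R) (x x' z : example d) :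
  0 <= rho -> rho <= 1 -> (hamming x' z <= hamming x z)%N ->
  gW rho x z <= gW rho x' z.
Proof.
move=> h0 h1 hh; rewrite !gW_ham.
set c := (1 - rho) / 4%:R; set a := rho / 2%:R + (1 - rho) / 4%:R.
have c0 : 0 <= c by rewrite /c; lra.
have ca : c <= a by rewrite /c /a; lra.
have a0 : 0 <= a by lra.
have hd : (hamming x z <= d)%N by rewrite /hamming; have := max_card (mem [set i | x i != z i]); rewrite card_ord.
set h := hamming x z in hh hd *; set h' := hamming x' z in hh *.
have -> : h = (h' + (h - h'))%N by lia.
have -> : (d - h')%N = ((h - h') + (d - h))%N by lia.
have -> : (d - (h' + (h - h')))%N = (d - h)%N by lia.
rewrite !exprD mulrA.
apply: ler_wpM2r; first exact: exprn_ge0.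
apply: ler_wpM2l; first exact: exprn_ge0.
by apply: lerXn2r; rewrite ?nnegrE.
Qed.

Definition WW (R : realFieldType) (k d : nat) (rho : R)
  (X : {ffun 'I_k -> example d}) (z : example d) (js : 'I_k) : R :=
  \sum_(S : {ffun 'I_k -> subpop d})
    (\prod_(j < k) (subpop_prob rho (S j) * example_prob R (S j) (X j)))
    * (k%:R)^-1 * example_prob R (S js) z.

Lemma succ_eq (R : realFieldType) (k d : nat) (rho : R) (A : strategy R k d) :
  success_prob rho A =
  \sum_(X : {ffun 'I_k -> example d}) \sum_(z : example d) \sum_(js < k)
     WW rho X z js * A X z js.
Proof.
rewrite /success_prob exchange_big; apply: eq_bigr => X _.
rewrite exchange_big /=.
under eq_bigr => js _ do rewrite exchange_big /=.
rewrite exchange_big /=; apply: eq_bigr => z _; apply: eq_bigr => js _.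
by rewrite /WW mulr_suml.
Qed.

Lemma WW_eq (R : realFieldType) (k d : nat) (rho : R)
  (X : {ffun 'I_k -> example d}) (z : example d) (js : 'I_k) :
  WW rho X z js = (k%:R)^-1 * (gW rho (X js) z * (\prod_(i < d) (2%:R^-1 : R)) ^+ k.-1).
Proof.
rewrite /WW.
transitivity ((k%:R)^-1 * \sum_(S : {ffun 'I_k -> subpop d}) \prod_(j < k)
   (subpop_prob rho (S j) * example_prob R (S j) (X j) *
    (if j == js then example_prob R (S j) z else 1))).
  rewrite mulr_sumr; apply: eq_bigr => S _.
  rewrite [in RHS]big_split /=.
  rewrite [Y in _ = _ * (_ * Y)](bigD1 js) //= eqxx.
  rewrite [Y in _ = _ * (_ * (_ * Y))]big1 ?mulr1; last by move=> j /negbTE ->.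
  ring.
rewrite -(bigA_distr_bigA (fun j s => subpop_prob rho s * example_prob R s (X j) *
    (if j == js then example_prob R s z else 1))) /=.
congr (_ * _); rewrite (bigD1 js) //= eqxx; congr (_ * _).
rewrite (eq_bigr (fun _ => \prod_(i < d) (2%:R^-1 : R))); last first.
  move=> j /negbTE ->; rewrite -(mW_const rho (X j)); apply: eq_bigr => s _.
  by rewrite mulr1.
by rewrite prodr_const cardC1 card_ord.
Qed.

Unset Implicit Arguments.
Theorem proposition4p1 (R : realFieldType) (k d : nat) (rho : R)
  (hrho0 : 0 <= rho) (hrho1 : rho <= 1)
  (f : {ffun 'I_k -> example d} -> example d -> 'I_k)
  (hf : nearest_neighbor_rule f)
  (A : strategy R k d) (hA : is_strategy A) :
  success_prob rho A <= success_prob rho (det_strategy R f).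
Proof.
rewrite !succ_eq; apply: ler_sum => X _; apply: ler_sum => z _.
have Wle : forall j, WW rho X z j <= WW rho X z (f X z).
  move=> j; rewrite !WW_eq; apply: ler_wpM2l; first by rewrite invr_ge0 ler0n.
  apply: ler_wpM2r.
    by apply: exprn_ge0; apply: prodr_ge0 => i _; rewrite invr_ge0 ler0n.
  exact: gW_mono (hf X z j).
have [hA0 hA1] := hA X z.
apply: (@le_trans _ _ (\sum_(js < k) WW rho X z (f X z) * A X z js)).
  by apply: ler_sum => js _; apply: ler_wpM2r.
rewrite -mulr_sumr hA1 mulr1.
rewrite (bigD1 (f X z)) //= /det_strategy eqxx mulr1 big1 ?addr0 //.
by move=> j /negbTE ne; rewrite eq_sym ne mulr0.
Qed.
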